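(* Let $d\ge1$, $0<c\le\infty$, $X=(0,c)$, $X_{\mathrm{SYM}}=(-c,0)\cup(0,c)$, $\mathbb{X}=(X_{\mathrm{SYM}})^d$. For $i=1,\dots,d$ let $w_i\in C^2(X)$ be strictly positive, $p_i\in C^2(X)$ real-valued and nonvanishing, $q_i\in C^1(X)$ real-valued, $a_i\ge0$ constants, $A=\sum_ia_i$, $\mu_i(dx)=w_i(x)dx$ on $X$, $\delta_i=p_i\frac{d}{dx}+q_i$, $\delta_i^*=-p_i\frac{d}{dx}+q_i-p_i\frac{w_i'}{w_i}-p_i'$, $L_i=a_i+\delta_i^*\delta_i$. Assume for each $i$ there is an orthonormal basis $\{\varphi^{(i)}_k:k\in\mathbb{N}\}$ of $L^2(X,\mu_i)$ with $\varphi^{(i)}_k\in C^\infty(X)$, $L_i\varphi^{(i)}_k=\lambda^{(i)}_k\varphi^{(i)}_k$, $\lambda^{(i)}_0<\lambda^{(i)}_1<\dots\to\infty$, $\delta_i\varphi^{(i)}_k\in L^2(X,\mu_i)$ and $\langle\delta_i\varphi^{(i)}_k,\delta_i\varphi^{(i)}_m\rangle_{\mu_i}=\langle\delta_i^*\delta_i\varphi^{(i)}_k,\varphi^{(i)}_m\rangle_{\mu_i}$ for all $k,m$; assume moreover $a_i=\lambda^{(i)}_0$ for every $i$. Extend $w_i,p_i,\varphi^{(i)}_k$ evenly and $q_i$ oddly to $X_{\mathrm{SYM}}$ (and $\delta_i$ accordingly), and let $\mu(dx)=w_1(x_1)\cdots w_d(x_d)dx$ on $\mathbb{X}$. Define $$\Phi^{(i)}_{n}=\tfrac1{\sqrt2}\varphi^{(i)}_{n/2}\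 (n\text{ even}),\qquad \Phi^{(i)}_{n}=-\tfrac1{\sqrt2}\big(\lambda^{(i)}_{(n+1)/2}-a_i\big)^{-1/2}\delta_i\varphi^{(i)}_{(n+1)/2}\ (n\text{ odd}),$$ $\Phi_n=\Phi^{(1)}_{n_1}\otimes\cdots\otimes\Phi^{(d)}_{n_d}$ for $n\in\mathbb{N}^d$, and let $D_j$, $\mathbb{L}$ be $$D_jf(x)=p_j(x_j)\partial_{x_j}f(x)+q_j(x_j)\tfrac{f(x)+f(\sigma_jx)}{2}+\Big[p_j(x_j)\tfrac{w_j'(x_j)}{w_j(x_j)}+p_j'(x_j)-q_j(x_j)\Big]\tfrac{f(x)-f(\sigma_jx)}{2},\qquad \mathbb{L}=A-\sum_{i=1}^dD_i^2,$$ with $\sigma_j$ the reflection changing the sign of the $j$th coordinate. Then for all $n\in\mathbb{N}^d$, $$\mathbb{L}\Phi_n=\Big(\lambda^{(1)}_{\lfloor\frac{n_1+1}2\rfloor}+\dots+\lambda^{(d)}_{\lfloor\frac{n_d+1}2\rfloor}\Big)\Phi_n.$$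
   Context: $\mathbb{N}=\{0,1,2,\dots\}$; $\lfloor\cdot\rfloor$ is the floor function. *)

(* Defs.v *)
From HB Require Import structures.
From mathcomp Require Import all_boot all_order all_algebra.
From mathcomp Require Import all_classical all_reals all_analysis.
Set Implicit Arguments. Unset Strict Implicit. Unset Printing Implicit Defensive.
Import Order.TTheory GRing.Theory Num.Theory.
Import numFieldNormedType.Exports.
Local Open Scope classical_set_scope.
Local Open Scope ring_scope.

Section Defs.
Variable R : realType.

Definition Xint (c : \bar R) : set R := [set x | 0 < x /\ (x%:E < c)%E].
Definition Xsym (c : \bar R) : set R := [set x | x != 0 /\ (`|x|%:E < c)%E].
Definition Xbold (d : nat) (c : \bar R) : set ('I_d -> R) :=
  [set x | forall i, Xsym c (x i)].

Definition Ck_on (k : nat) (U : set R) (f : R -> R) : Prop :=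
  (forall n, (n < k)%N -> forall x, U x -> derivable (derive1n n f) x 1) /\
  (forall x, U x -> {for x, continuous (derive1n k f)}).
Definition Cinf_on (U : set R) (f : R -> R) : Prop := forall k, Ck_on k U f.

Definition L2w (U : set R) (w f : R -> R) : Prop :=
  measurable_fun U f /\
  (\int[lebesgue_measure]_(x in U) ((f x) ^+ 2 * w x)%:E < +oo)%E.

Definition ipw (U : set R) (w f g : R -> R) : R :=
  \int[lebesgue_measure]_(x in U) (f x * g x * w x).

Definition ONB (U : set R) (w : R -> R) (phi : nat -> R -> R) : Prop :=
  (forall k, L2w U w (phi k)) /\
  (forall k m, ipw U w (phi k) (phi m) = (k == m)%:R) /\
  (forall f, L2w U w f -> (forall k, ipw U w f (phi k) = 0) ->
     {ae lebesgue_measure, forall x, U x -> f x = 0}).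

Definition delta (p q f : R -> R) : R -> R :=
  fun x => p x * derive1 f x + q x * f x.
Definition deltaS (w p q f : R -> R) : R -> R :=
  fun x => - (p x * derive1 f x) + q x * f x - p x * (derive1 w x / w x) * f x
           - derive1 p x * f x.

Definition even_ext (f : R -> R) : R -> R := fun x => f `|x|.
Definition odd_ext (f : R -> R) : R -> R := fun x => Num.sg x * f `|x|.

Variable d : nat.

Definition Phi1 (w p q : R -> R) (a : R) (lam : nat -> R)
  (phi : nat -> R -> R) (n : nat) : R -> R :=
  if odd n then
    fun x => - (Num.sqrt 2)^-1 * (Num.sqrt (lam n.+1./2 - a))^-1 *
             delta (even_ext p) (odd_ext q) (even_ext (phi n.+1./2)) x
  else fun x => (Num.sqrt 2)^-1 * even_ext (phi n./2) x.

Definition PhiN (w p q : 'I_d -> R -> R) (a : 'I_d -> R)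
  (lam : 'I_d -> nat -> R) (phi : 'I_d -> nat -> R -> R) (n : 'I_d -> nat)
  : ('I_d -> R) -> R :=
  fun x => \prod_(i < d) Phi1 (w i) (p i) (q i) (a i) (lam i) (phi i) (n i) (x i).

Definition sigma (j : 'I_d) (x : 'I_d -> R) : 'I_d -> R :=
  fun i => if i == j then - x i else x i.
Definition partial (j : 'I_d) (f : ('I_d -> R) -> R) (x : 'I_d -> R) : R :=
  derive1 (fun t => f (fun i => if i == j then t else x i)) (x j).

Definition Dop (w p q : 'I_d -> R -> R) (j : 'I_d) (f : ('I_d -> R) -> R)
  : ('I_d -> R) -> R :=
  fun x =>
    let wj := even_ext (w j) in let pj := even_ext (p j) in
    let qj := odd_ext (q j) in
    pj (x j) * partial j f x + qj (x j) * ((f x + f (sigma j x)) / 2)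
    + (pj (x j) * (derive1 wj (x j) / wj (x j)) + derive1 pj (x j) - qj (x j))
      * ((f x - f (sigma j x)) / 2).

Definition Lbold (w p q : 'I_d -> R -> R) (A : R) (f : ('I_d -> R) -> R)
  : ('I_d -> R) -> R :=
  fun x => A * f x - \sum_(i < d) Dop w p q i (Dop w p q i f) x.

End Defs.

(* Main.v *)
Require Import Defs.
From HB Require Import structures.
From mathcomp Require Import all_boot all_order all_algebra.
From mathcomp Require Import all_classical all_reals all_analysis.
From mathcomp Require Import ring.
Import Order.TTheory GRing.Theory Num.Theory.
Import numFieldNormedType.Exports.
Local Open Scope classical_set_scope.
Local Open Scope ring_scope.



Section Helpers.
Variable R : realType.

Lemma refl_der (f : R -> R) t : derivable f (- t) 1 ->
  derivable (fun u => f (- u)) t 1 /\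
  derive1 (fun u => f (- u)) t = - derive1 f (- t).
Proof.
move=> df.
have dn : derivable (-%R : R -> R) t 1 by exact: derivable_opp.
have -> : (fun u => f (- u)) = f \o -%R by [].
split.
  apply/derivable1_diffP; apply: differentiable_comp.
    exact/derivable1_diffP.
  exact/derivable1_diffP.
rewrite derive1_comp //.
have -> : derive1 (-%R : R -> R) t = -1.
  have -> : (-%R : R -> R) = - id by apply/funext.
  by rewrite derive1N ?derive1_id //; exact: derivable_id.
by rewrite mulrN1.
Qed.

Lemma near_der (f g : R -> R) t : (\forall u \near t, f u = g u) ->
  derivable f t 1 -> derivable g t 1 /\ derive1 g t = derive1 f t.
Proof.
move=> fg df; split; first exact: near_eq_derivable fg df.
by rewrite !derive1E; apply/esym/near_eq_derive.
Qed.

Lemma even_der (f : R -> R) t : t != 0 -> derivable f `|t| 1 ->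
  derivable (even_ext f) t 1 /\
  derive1 (even_ext f) t = Num.sg t * derive1 f `|t|.
Proof.
move=> t0 df; case: (ltgtP t 0) t0 => // [tlt|tgt] _.
- have [d1 d2] := @refl_der f t ltac:(by rewrite -ltr0_norm).
  have nr : \forall u \near t, (fun u => f (- u)) u = even_ext f u.
    by near=> u; rewrite /even_ext ltr0_norm //; near: u; exact: lt_nbhsl.
  have [e1 e2] := near_der _ _ _ nr d1.
  by split => //; rewrite e2 d2 ltr0_sg // ltr0_norm // mulN1r.
- have nr : \forall u \near t, f u = even_ext f u.
    by near=> u; rewrite /even_ext gtr0_norm //; near: u; exact: lt_nbhsr.
  have [e1 e2] := near_der _ _ _ nr ltac:(by rewrite -(gtr0_norm tgt)).
  by split => //; rewrite e2 gtr0_sg // gtr0_norm // mul1r.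
Unshelve. all: by end_near.
Qed.

Lemma odd_der (f : R -> R) t : t != 0 -> derivable f `|t| 1 ->
  derivable (odd_ext f) t 1 /\
  derive1 (odd_ext f) t = derive1 f `|t|.
Proof.
move=> t0 df; case: (ltgtP t 0) t0 => // [tlt|tgt] _.
- have [d1 d2] := @refl_der f t ltac:(by rewrite -ltr0_norm).
  have d3 : derivable (- (fun u => f (- u))) t 1 by exact: derivableN.
  have nr : \forall u \near t, (- (fun u => f (- u))) u = odd_ext f u.
    near=> u; rewrite /odd_ext ltr0_norm ?ltr0_sg ?mulN1r //;
      near: u; exact: lt_nbhsl.
  have [e1 e2] := near_der _ _ _ nr d3.
  split => //; rewrite e2 derive1N // d2 ltr0_norm //.
  by rewrite opprK.
- have nr : \forall u \near t, f u = odd_ext f u.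
    near=> u; rewrite /odd_ext gtr0_norm ?gtr0_sg ?mul1r //;
    near: u; exact: lt_nbhsr.
  have [e1 e2] := near_der _ _ _ nr ltac:(by rewrite -(gtr0_norm tgt)).
  by split => //; rewrite e2 gtr0_norm.
Unshelve. all: by end_near.
Qed.

Lemma Xsym_near (c : \bar R) t : Xsym c t -> \forall u \near t, Xsym c u.
Proof.
case=> t0 tc.
have h1 : \forall u \near t, u != 0.
  case: (ltgtP t 0) t0 => // [tlt|tgt] _.
    by near=> u; apply: ltr0_neq0; near: u; exact: lt_nbhsl.
  by near=> u; apply: lt0r_neq0; near: u; exact: lt_nbhsr.
case: c tc => [r| |] tc.
- have h2 : \forall u \near t, u < r.
    by apply: lt_nbhsl; rewrite lte_fin in tc; exact: le_lt_trans (ler_norm _) tc.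
  have h3 : \forall u \near t, - u < r.
    by apply: Nlt_nbhsl; rewrite lte_fin in tc; rewrite -normrN in tc;
      exact: le_lt_trans (ler_norm _) tc.
  near=> u; split; first by near: u.
  by rewrite lte_fin ltr_norml -ltrNl; apply/andP; split; [near: u|near: u].
- by near=> u; split; [near: u|exact: ltry].
- by [].
Unshelve. all: by end_near.
Qed.

Lemma XsymN (c : \bar R) t : Xsym c t -> Xsym c (- t).
Proof. by case=> t0 tc; split; rewrite ?oppr_eq0 ?normrN. Qed.

Lemma Xsym_int (c : \bar R) t : Xsym c t -> Xint c `|t|.
Proof. by case=> t0 tc; split; rewrite ?normr_gt0. Qed.

End Helpers.
Arguments Xsym_int {R c t}.
Arguments XsymN {R c t}.
Arguments Xsym_near {R c t}.
Arguments even_der {R}.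
Arguments odd_der {R}.
Arguments refl_der {R}.
Arguments near_der {R}.



Definition D1 (R : realType) (w p q g : R -> R) (t : R) : R :=
  let wj := even_ext w in let pj := even_ext p in let qj := odd_ext q in
  pj t * derive1 g t + qj t * ((g t + g (- t)) / 2)
  + (pj t * (derive1 wj t / wj t) + derive1 pj t - qj t) * ((g t - g (- t)) / 2).

Arguments D1 {R}.

Section OneD.
Variables (R : realType) (c : \bar R) (w p q phi : R -> R) (a lam : R).
Hypothesis dw : forall x, Xint c x -> derivable w x 1.
Hypothesis dp : forall x, Xint c x -> derivable p x 1.
Hypothesis dq : forall x, Xint c x -> derivable q x 1.
Hypothesis dphi : forall x, Xint c x -> derivable phi x 1.
Hypothesis dphi1 : forall x, Xint c x -> derivable (derive1 phi) x 1.
Hypothesis w0 : forall x, Xint c x -> w x != 0.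
Hypothesis eig : forall x, Xint c x ->
  a * phi x + deltaS w p q (delta p q phi) x = lam * phi x.

Lemma sg_cases (t : R) : t != 0 -> Num.sg t = 1 \/ Num.sg t = -1.
Proof.
by case: (ltgtP t 0) => // [tlt|tgt] _; [right; rewrite ltr0_sg|left; rewrite gtr0_sg].
Qed.

Lemma ddelta x : Xint c x -> derivable (delta p q phi) x 1.
Proof.
move=> xi.
have -> : delta p q phi = (p * derive1 phi) + (q * phi) by apply/funext.
apply: derivableD; apply: derivableM; auto.
Qed.

Lemma deltaE t : Xsym c t ->
  delta (even_ext p) (odd_ext q) (even_ext phi) t = odd_ext (delta p q phi) t.
Proof.
move=> ts; have ti := Xsym_int ts; case: ts => t0 _.
have [_ e] := even_der phi t t0 (dphi _ ti).
rewrite /delta e /even_ext /odd_ext; ring.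
Qed.

Lemma D1_even C t : Xsym c t ->
  derivable (fun u => C * even_ext phi u) t 1 /\
  D1 w p q (fun u => C * even_ext phi u) t = C * odd_ext (delta p q phi) t.
Proof.
move=> ts; have ti := Xsym_int ts; case: ts => t0 _.
have [e1 e2] := even_der phi t t0 (dphi _ ti).
split; first by apply: derivableZ.
rewrite /D1 derive1Ml // e2 /even_ext /odd_ext /delta normrN.
have wt := w0 _ ti.
by field.
Qed.

Lemma D1_odd C t : Xsym c t ->
  derivable (fun u => C * odd_ext (delta p q phi) u) t 1 /\
  D1 w p q (fun u => C * odd_ext (delta p q phi) u) t
  = - C * (lam - a) * even_ext phi t.
Proof.
move=> ts; have ti := Xsym_int ts; case: ts => t0 _.
have [e1 e2] := odd_der (delta p q phi) t t0 (ddelta _ ti).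
have [w1 w2] := even_der w t t0 (dw _ ti).
have [p1 p2] := even_der p t t0 (dp _ ti).
split; first by apply: derivableZ.
have E := eig _ ti; move: E; rewrite /deltaS => E.
rewrite /D1 derive1Ml // e2 w2 p2 /even_ext /odd_ext normrN sgrN.
rewrite (_ : - C * (lam - a) * phi `|t| = - C * (lam * phi `|t| - a * phi `|t|)); last by ring.
rewrite -E.

have wt := w0 _ ti.
case: (sg_cases _ t0) => ->; by field.
Qed.

Lemma D1_near (g1 g2 : R -> R) (t : R) : (\forall u \near t, g1 u = g2 u) -> g1 (- t) = g2 (- t) ->
  derivable g1 t 1 -> derivable g2 t 1 /\ D1 w p q g2 t = D1 w p q g1 t.
Proof.
move=> nr et d1; have [e1 e2] := near_der _ _ _ nr d1.
split => //; rewrite /D1 e2 et (nbhs_singleton nr) //.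
Qed.

End OneD.
Arguments deltaE {R c p q phi}.
Arguments D1_odd {R c w p q phi a lam}.
Arguments D1_even {R c w p q phi}.
Arguments D1_near {R}.



Lemma Phi1_spec (R : realType) (c : \bar R) (w p q : R -> R) (a : R)
  (lam : nat -> R) (phi : nat -> R -> R) (n : nat) :
  (forall x, Xint c x -> derivable w x 1) ->
  (forall x, Xint c x -> derivable p x 1) ->
  (forall x, Xint c x -> derivable q x 1) ->
  (forall k x, Xint c x -> derivable (phi k) x 1) ->
  (forall k x, Xint c x -> derivable (derive1 (phi k)) x 1) ->
  (forall x, Xint c x -> w x != 0) ->
  (forall k x, Xint c x ->
    a * phi k x + deltaS w p q (delta p q (phi k)) x = lam k * phi k x) ->
  exists G : R -> R, forall t, Xsym c t ->
    derivable (Phi1 w p q a lam phi n) t 1 /\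
    D1 w p q (Phi1 w p q a lam phi n) t = G t /\
    derivable G t 1 /\
    D1 w p q G t = - (lam n.+1./2 - a) * Phi1 w p q a lam phi n t.
Proof.
move=> dw dp dq dphi dphi1 w0 eig.
rewrite /Phi1; case hn : (odd n).
- set k := n.+1./2.
  set C0 := - (Num.sqrt 2)^-1 * (Num.sqrt (lam k - a))^-1.
  exists (fun u => (- C0 * (lam k - a)) * even_ext (phi k) u) => t ts.
  have nr : \forall u \near t, C0 * odd_ext (delta p q (phi k)) u =
      C0 * delta (even_ext p) (odd_ext q) (even_ext (phi k)) u.
    move: (Xsym_near ts); apply: filterS => u us.
    by rewrite (deltaE (dphi k) _ us).
  have [h1 h2] := D1_odd dw dp dq (dphi k) (dphi1 k) w0 (eig k) C0 _ ts.
  have ng : (fun u => C0 * odd_ext (delta p q (phi k)) u) (- t) =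
      (fun u => C0 * delta (even_ext p) (odd_ext q) (even_ext (phi k)) u) (- t).
    by rewrite /= (deltaE (dphi k) _ (XsymN ts)).
  have [n1 n2] := D1_near w p q _ _ t nr ng h1.
  have [e1 e2] := @D1_even _ _ w p q _ (dphi k) w0 (- C0 * (lam k - a)) _ ts.
  split => //; split; first by rewrite n2 h2.
  split => //; rewrite e2 (deltaE (dphi k) _ ts); ring.
- have hk : n.+1./2 = n./2 by rewrite -uphalfE uphalf_half hn.
  rewrite hk; set k := n./2.
  set C := (Num.sqrt 2)^-1.
  exists (fun u => C * odd_ext (delta p q (phi k)) u) => t ts.
  have [e1 e2] := @D1_even _ _ w p q _ (dphi k) w0 C _ ts.
  have [h1 h2] := D1_odd dw dp dq (dphi k) (dphi1 k) w0 (eig k) C _ ts.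
  do 3 (split => //); rewrite h2; ring.
Qed.



Lemma DopLoc (R : realType) (d : nat) (c : \bar R) (w p q : 'I_d -> R -> R)
  (j : 'I_d) (H Ff : ('I_d -> R) -> R) (G : R -> R) (x : 'I_d -> R) :
  (forall y u, H (fun i => if i == j then u else y i) = H y) ->
  (forall y, H (sigma j y) = H y) ->
  Xsym c (x j) -> derivable G (x j) 1 ->
  (forall z, Xsym c (z j) -> Ff z = H z * G (z j)) ->
  Dop w p q j Ff x = H x * D1 (w j) (p j) (q j) G (x j).
Proof.
move=> hH hs xs dG hF.
have e1 : partial j Ff x = H x * derive1 G (x j).
  rewrite /partial.
  have nr : \forall u \near x j,
      (fun u => H x * G u) u = Ff (fun i => if i == j then u else x i).
    move: (Xsym_near xs); apply: filterS => u us.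
    rewrite hF; last by rewrite /= eqxx.
    by rewrite hH /= eqxx.
  have dG' : derivable (fun u => H x * G u) (x j) 1 by apply: derivableZ.
  have [_ ->] := near_der _ _ _ nr dG'.
  by rewrite derive1Ml.
have sx : Xsym c (sigma j x j) by rewrite /sigma eqxx; exact: XsymN xs.
rewrite /Dop /D1 e1 (hF x xs) (hF (sigma j x) sx) hs /=.
rewrite /sigma eqxx.
ring.
Qed.

Arguments DopLoc {R d c w p q j H Ff G x}.

Theorem mainTheorem3 (R : realType) (d : nat) (c : \bar R)
  (w p q : 'I_d -> R -> R) (a : 'I_d -> R)
  (phi : 'I_d -> nat -> R -> R) (lam : 'I_d -> nat -> R) :
  (1 <= d)%N ->
  (0 < c)%E ->
  (forall i, Ck_on 2 (Xint c) (w i)) ->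
  (forall i x, Xint c x -> 0 < w i x) ->
  (forall i, Ck_on 2 (Xint c) (p i)) ->
  (forall i x, Xint c x -> p i x != 0) ->
  (forall i, Ck_on 1 (Xint c) (q i)) ->
  (forall i, 0 <= a i) ->
  (forall i, ONB (Xint c) (w i) (phi i)) ->
  (forall i k, Cinf_on (Xint c) (phi i k)) ->
  (forall i k x, Xint c x ->
     a i * phi i k x
     + deltaS (w i) (p i) (q i) (delta (p i) (q i) (phi i k)) x
     = lam i k * phi i k x) ->
  (forall i k, lam i k < lam i k.+1) ->
  (forall i, lam i @ \oo --> +oo) ->
  (forall i k, L2w (Xint c) (w i) (delta (p i) (q i) (phi i k))) ->
  (forall i k m,
     ipw (Xint c) (w i) (delta (p i) (q i) (phi i k))
                        (delta (p i) (q i) (phi i m))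
     = ipw (Xint c) (w i)
         (deltaS (w i) (p i) (q i) (delta (p i) (q i) (phi i k)))
         (phi i m)) ->
  (forall i, a i = lam i 0%N) ->
  forall (n : 'I_d -> nat) (x : 'I_d -> R), Xbold c x ->
    Lbold w p q (\sum_(i < d) a i) (PhiN w p q a lam phi n) x
    = (\sum_(i < d) lam i (n i).+1./2) * PhiN w p q a lam phi n x.
Proof.
move=> d1 c0 Cw wpos Cp pn0 Cq a0 onb Cphi eig lmono linf L2 hip aeq n x xb.
have dw : forall i y, Xint c y -> derivable (w i) y 1.
  by move=> i y yi; exact: ((Cw i).1 0%N isT y yi).
have dp : forall i y, Xint c y -> derivable (p i) y 1.
  by move=> i y yi; exact: ((Cp i).1 0%N isT y yi).
have dq : forall i y, Xint c y -> derivable (q i) y 1.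
  by move=> i y yi; exact: ((Cq i).1 0%N isT y yi).
have dphi : forall i k y, Xint c y -> derivable (phi i k) y 1.
  by move=> i k y yi; exact: ((Cphi i k 2%N).1 0%N isT y yi).
have dphi1 : forall i k y, Xint c y -> derivable (derive1 (phi i k)) y 1.
  by move=> i k y yi; exact: ((Cphi i k 2%N).1 1%N isT y yi).
have w0 : forall i y, Xint c y -> w i y != 0.
  by move=> i y yi; exact: lt0r_neq0 (wpos i y yi).
have key : forall j : 'I_d,
    Dop w p q j (Dop w p q j (PhiN w p q a lam phi n)) x
    = - (lam j (n j).+1./2 - a j) * PhiN w p q a lam phi n x.
  move=> j.
  have [G hG] := @Phi1_spec R c (w j) (p j) (q j) (a j) (lam j) (phi j) (n j)
    (dw j) (dp j) (dq j) (dphi j) (dphi1 j) (w0 j) (eig j).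
  pose H := fun y : 'I_d -> R =>
    \prod_(i < d | i != j) Phi1 (w i) (p i) (q i) (a i) (lam i) (phi i) (n i) (y i).
  have fE : forall y, PhiN w p q a lam phi n y =
      H y * Phi1 (w j) (p j) (q j) (a j) (lam j) (phi j) (n j) (y j).
    by move=> y; rewrite /PhiN (bigD1 j) //= mulrC.
  have hH : forall y u, H (fun i => if i == j then u else y i) = H y.
    by move=> y u; apply: eq_bigr => i /negbTE ->.
  have hs : forall y, H (sigma j y) = H y.
    by move=> y; apply: eq_bigr => i /negbTE ih; rewrite /sigma ih.
  have step1 : forall z, Xsym c (z j) ->
      Dop w p q j (PhiN w p q a lam phi n) z = H z * G (z j).
    move=> z zs; have [g1 [g2 _]] := hG _ zs.
    by rewrite (DopLoc hH hs zs g1 (fun y _ => fE y)) g2.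
  have [_ [_ [g3 g4]]] := hG _ (xb j).
  by rewrite (DopLoc hH hs (xb j) g3 step1) g4 fE; ring.
rewrite /Lbold [X in _ - X](eq_bigr (fun i => - (lam i (n i).+1./2 - a i) * PhiN w p q a lam phi n x));
  last by move=> i _; exact: key.
rewrite -mulr_suml sumrN sumrB; ring.
Qed.
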